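(* For every $\Delta\ge 2$, $\mathrm{LP}[\mathsf{GRAPH}_\Delta]\subsetneq\mathrm{NLP}[\mathsf{GRAPH}_\Delta]$; in particular $\mathrm{LP}\subsetneq\mathrm{NLP}$.
   Context: Graphs. All graphs are finite, nonempty, simple, undirected and connected, and labeled: a graph is a triple $G=(V(G),E(G),\lambda_G)$ with labeling $\lambda_G:V(G)\to\{0,1\}^*$. $\mathsf{GRAPH}$ is the set of all graphs. A graph property is a subset of $\mathsf{GRAPH}$ closed under label-preserving isomorphism. For a class $\mathcal C$ of properties and a set $B$ of graphs, $\mathcal C[B]=\{P\cap B : P\in\mathcal C\}$. $N^G_r(u)$ denotes the subgraph of $G$ induced by the nodes at distance at most $r$ from $u$ (with inherited labels). The structural degree of a node $u$ is $\deg(u)+|\lambda_G(u)|$; $\mathsf{GRAPH}_\Delta$ is the set of graphs all of whose nodes have structural degree at most $\Delta$. Identifiers and certificates. An identifier assignment of $G$ is a map $\mathrm{id}:V(G)\to\{0,1\}^*$; it is $r$-locally unique if $\mathrm{id}(u)\neq\mathrm{id}(v)$ for all distinct nodes $u,v$ at distance at most $2r$. Identifiers are ordered lexicographically (a proper prefix is smaller). A certificate assignment is a map $\kappa:V(G)\to\{0,1\}^*$; for $r\in\mathbb N$ and $p:\mathbb N\to\mathbb N$ it is $(r,p)$-bounded (w.r.t. $(G,\mathrm{id})$) if $|\kappa(u)|\le p\big(\sum_{v\in N^G_r(u)}(1+|\lambda_G(v)|+|\mathrm{id}(v)|)\big)$ for every node $u$. Distributed Turing machines. Such a machine $M$ is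 a Turing machine with three one-way-infinite tapes (receiving, internal, sending) over the alphabet $\{\vdash,\square,\#,0,1\}$ (left-end marker, blank, separator, bits), with designated states start, pause, stop. It is executed on a graph $G$ under an (at least $1$-locally unique) identifier assignment $\mathrm{id}$ and a certificate assignment $\kappa$: every node runs its own copy of $M$ in synchronous rounds. In each round, a node $u$ whose neighbors are $v_1,\dots,v_d$ in increasing identifier order (i) gets $m_1\#\cdots\#m_d\#$ on its receiving tape, where $m_i$ is the message sent to it by $v_i$ in the previous round (empty in the first round); (ii) its sending tape is emptied, its internal tape is initialized to $\lambda_G(u)\#\mathrm{id}(u)\#\kappa(u)$ in the first round and otherwise keeps its content, and, unless $u$ reached stop in an earlier round, $M$ runs from state start with all heads leftmost until it enters pause or stop; (iii) $u$ sends to $v_i$ the $i$-th $\#$-separated bit string on its sending tape (the empty string if there is none). The execution terminates once all nodes are in stop. The result $M(G,\mathrm{id},\kappa)$ is $G$ relabeled so that each node gets the bit string on its internal tape (other symbols ignored); $G$ is accepted, written $M(G,\mathrm{id},\kappa)\equiv\mathrm{accept}$, if every node's resulting label is the string $1$. A local-polynomial machine is a distributed Turing machine for which there are a constant $c$ and a polynomial $q$ such that, on every graph and under all identifier and certificate assignments, all nodes reach stop within $c$ rounds, and in every round every node makes at most $q(n)$ computation steps, $n$ being the total length of its receiving- and internal-tape contents at the beginning of the round. Classes. $\mathrm{LP}$ is the class of graph properties $P$ for which there are a local-polynomial machine $M$ and a constant $r_{\mathrm{id}}\ge1$ such that for every graph $G$ and every $r_{\mathrm{id}}$-locally unique identifier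 assignment $\mathrm{id}$, $M$ accepts $G$ under $\mathrm{id}$ (with empty certificates) iff $G\in P$. $\mathrm{NLP}$ is the class of graph properties $P$ for which there exist a local-polynomial machine $M$, constants $r_{\mathrm{id}},r\ge 1$ and a polynomial $p$ such that for every graph $G$ and every $r_{\mathrm{id}}$-locally unique identifier assignment $\mathrm{id}$ of $G$: $G\in P\iff\exists\kappa\,:\,M(G,\mathrm{id},\kappa)\equiv\mathrm{accept}$, $\kappa$ ranging over $(r,p)$-bounded certificate assignments of $(G,\mathrm{id})$. *)

(* Defs.v *)
From HB Require Import structures.
From mathcomp Require Import all_boot.

Set Implicit Arguments.
Unset Strict Implicit.
Unset Printing Implicit Defensive.

Definition bits := seq bool.

Record graph := Graph {
  gsize : nat;
  gadj : rel 'I_gsize;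
  glab : 'I_gsize -> bits;
  gsize_pos : 0 < gsize;
  gadj_sym : forall u v, gadj u v = gadj v u;
  gadj_irr : forall u, ~~ gadj u u;
  gconn : forall u v, connect gadj u v
}.

Definition vertex (G : graph) := 'I_(gsize G).

Definition graph_iso (G H : graph) : Prop :=
  exists f : vertex G -> vertex H,
    bijective f /\
    (forall u v, gadj (f u) (f v) = gadj u v) /\
    (forall u, glab (f u) = glab u).

Definition is_property (P : graph -> Prop) : Prop :=
  forall G H, graph_iso G H -> P G -> P H.

(* ball G k u v  <=>  dist_G(u, v) <= k *)
Fixpoint ball (G : graph) (k : nat) (u v : vertex G) : bool :=
  match k with
  | 0 => u == v
  | k'.+1 => ball k' u v || [exists w : vertex G, ball k' u w && gadj w v]
  end.

Definition degree (G : graph) (u : vertex G) : nat :=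
  #|[pred v : vertex G | gadj u v]|.

Definition graph_Delta (Delta : nat) (G : graph) : Prop :=
  forall u : vertex G, degree u + size (glab u) <= Delta.

Definition locally_unique (G : graph) (r : nat) (id : vertex G -> bits) : Prop :=
  forall u v : vertex G, u != v -> ball (2 * r) u v -> id u != id v.

(* polynomial with natural coefficients cs = [:: a0; a1; ...] *)
Definition npoly (cs : seq nat) (n : nat) : nat :=
  foldr (fun c acc => c + n * acc) 0 cs.

Definition cert_bounded (G : graph) (id : vertex G -> bits) (r : nat)
    (p : seq nat) (kappa : vertex G -> bits) : Prop :=
  forall u : vertex G,
    size (kappa u) <=
    npoly p (\sum_(v : vertex G | ball r u v) (1 + size (glab v) + size (id v))).

(* lexicographic order on bit strings, proper prefix smaller, 0 < 1 *)
Fixpoint lexle (s t : bits) : bool :=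
  match s, t with
  | [::], _ => true
  | _ :: _, [::] => false
  | b :: s', c :: t' => if b == c then lexle s' t' else ~~ b
  end.

Definition nbrs (G : graph) (id : vertex G -> bits) (u : vertex G) : seq (vertex G) :=
  sort (fun v w => lexle (id v) (id w)) [seq v <- enum 'I_(gsize G) | gadj u v].

Inductive sym := SLend | SBlank | SSep | S0 | S1.
Inductive move := MoveL | MoveS | MoveR.

Record dtm := DTM {
  state : finType;
  q_start : state;
  q_pause : state;
  q_stop : state;
  q_start_pause : q_start != q_pause;
  q_start_stop : q_start != q_stop;
  q_pause_stop : q_pause != q_stop;
  (* reads (receiving, internal, sending), writes, moves *)
  delta : state -> sym * sym * sym -> state * (sym * sym * sym) * (move * move * move)
}.

(* A one-way-infinite tape: cell 0 holds the left-end marker, the list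
   gives cells 1, 2, ...; all further cells are blank. *)
Definition tape := seq sym.

Definition tread (t : tape) (h : nat) : sym :=
  if h is h'.+1 then nth SBlank t h' else SLend.
Definition twrite (t : tape) (h : nat) (s : sym) : tape :=
  if h is h'.+1 then set_nth SBlank t h' s else t.
Definition tmove (h : nat) (m : move) : nat :=
  match m with MoveL => h.-1 | MoveS => h | MoveR => h.+1 end.

Record cfg (Q : Type) := Cfg {
  cst : Q;
  trecv : tape; tint : tape; tsend : tape;
  hrecv : nat; hint : nat; hsend : nat
}.

Definition halted (M : dtm) (C : cfg (state M)) : bool :=
  (cst C == q_pause M) || (cst C == q_stop M).

Definition tm_step (M : dtm) (C : cfg (state M)) : cfg (state M) :=
  let: (q', (w1, w2, w3), (m1, m2, m3)) :=
    delta (cst C) (tread (trecv C) (hrecv C), tread (tint C) (hint C),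
                   tread (tsend C) (hsend C)) in
  Cfg q' (twrite (trecv C) (hrecv C) w1) (twrite (tint C) (hint C) w2)
         (twrite (tsend C) (hsend C) w3)
         (tmove (hrecv C) m1) (tmove (hint C) m2) (tmove (hsend C) m3).

Fixpoint run_until (M : dtm) (fuel : nat) (C : cfg (state M)) : cfg (state M) :=
  match fuel with
  | 0 => C
  | k.+1 => if halted C then C else run_until k (tm_step C)
  end.

Definition sym_of_bit (b : bool) : sym := if b then S1 else S0.
Definition enc (s : bits) : tape := map sym_of_bit s.
Definition bits_of (t : tape) : bits :=
  pmap (fun s => match s with S0 => Some false | S1 => Some true | _ => None end) t.

(* length of the content of a tape: position of the last non-blank cell *)
Definition is_blank (s : sym) : bool := if s is SBlank then true else false.
Fixpoint drop_blanks (t : tape) : tape :=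
  if t is s :: t' then (if is_blank s then drop_blanks t' else t) else [::].
Definition clen (t : tape) : nat := size (drop_blanks (rev t)).

Fixpoint split_sep (t : tape) : seq tape :=
  match t with
  | [::] => [:: [::]]
  | SSep :: t' => [::] :: split_sep t'
  | s :: t' => match split_sep t' with
               | x :: xs => (s :: x) :: xs
               | [::] => [:: [:: s]]
               end
  end.

(* the i-th (0-based) #-separated bit string on a sending tape *)
Definition msg (t : tape) (i : nat) : bits := bits_of (nth [::] (split_sep t) i).

Record nstate := NS { ns_int : tape; ns_send : tape; ns_stop : bool }.

Definition init_int (l i k : bits) : tape :=
  enc l ++ SSep :: enc i ++ SSep :: enc k.

Definition node_round (M : dtm) (G : graph) (id : vertex G -> bits)
    (fuel : nat -> nat) (S : vertex G -> nstate) (u : vertex G) : nstate * bool :=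
  let recv := flatten [seq enc (msg (ns_send (S v)) (index u (nbrs id v))) ++ [:: SSep]
                      | v <- nbrs id u] in
  if ns_stop (S u) then (NS (ns_int (S u)) [::] true, true)
  else
    let C := run_until (fuel (clen recv + clen (ns_int (S u))))
                       (Cfg (q_start M) recv (ns_int (S u)) [::] 0 0 0) in
    (NS (tint C) (tsend C) (cst C == q_stop M), halted C).

(* global state after r rounds (plus flag: every run so far halted in time) *)
Fixpoint exec (M : dtm) (G : graph) (id kappa : vertex G -> bits)
    (fuel : nat -> nat) (r : nat) : (vertex G -> nstate) * bool :=
  match r with
  | 0 => (fun u => NS (init_int (glab u) (id u) (kappa u)) [::] false, true)
  | r'.+1 =>
      let (S, ok) := exec M id kappa fuel r' in
      (fun u => (node_round M id fuel S u).1,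
       ok && [forall u, (node_round M id fuel S u).2])
  end.

Definition accepts (M : dtm) (G : graph) (id kappa : vertex G -> bits) : Prop :=
  exists (fuel r : nat),
    let (S, ok) := exec M id kappa (fun _ => fuel) r in
    ok /\ (forall u, ns_stop (S u)) /\ (forall u, bits_of (ns_int (S u)) = [:: true]).

Definition local_poly (M : dtm) : Prop :=
  exists (c : nat) (q : seq nat),
    forall (G : graph) (id kappa : vertex G -> bits),
      locally_unique 1 id ->
      let (S, ok) := exec M id kappa (npoly q) c in
      ok /\ (forall u, ns_stop (S u)).

Definition gclass := (graph -> Prop) -> Prop.

Definition LP : gclass := fun P =>
  is_property P /\
  exists (M : dtm) (r_id : nat),
    1 <= r_id /\ local_poly M /\
    forall (G : graph) (id : vertex G -> bits),
      locally_unique r_id id -> (accepts M id (fun _ => [::]) <-> P G).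

Definition NLP : gclass := fun P =>
  is_property P /\
  exists (M : dtm) (r_id r : nat) (p : seq nat),
    1 <= r_id /\ 1 <= r /\ local_poly M /\
    forall (G : graph) (id : vertex G -> bits),
      locally_unique r_id id ->
      (P G <-> exists kappa, cert_bounded id r p kappa /\ accepts M id kappa).

(* C[B] = { P ∩ B : P ∈ C } (sets of graphs compared extensionally) *)
Definition restrict (C : gclass) (B : graph -> Prop) : gclass := fun Q =>
  exists P, C P /\ forall G, Q G <-> (P G /\ B G).

Definition strict_subclass (C D : gclass) : Prop :=
  (forall P, C P -> D P) /\ exists P, D P /\ ~ C P.

(* Main.v *)
From HB Require Import structures.
Require Import Defs.
From mathcomp Require Import all_boot zify.
From Stdlib Require Import FunctionalExtensionality.
Set Implicit Arguments.
Unset Strict Implicit.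
Unset Printing Implicit Defensive.

Inductive st := Start | Disp | R1scan of bool | R1send of bool | R1sep of bool
  | R2find | R2chk of bool & bool | Pause | Stop.

Definition stT := (unit + unit + bool + bool + bool + unit + (bool * bool) + unit + unit)%type.

Definition st_enc (s : st) : stT :=
  match s with
  | Start => inl (inl (inl (inl (inl (inl (inl (inl tt)))))))
  | Disp => inl (inl (inl (inl (inl (inl (inl (inr tt)))))))
  | R1scan b => inl (inl (inl (inl (inl (inl (inr b))))))
  | R1send b => inl (inl (inl (inl (inl (inr b)))))
  | R1sep b => inl (inl (inl (inl (inr b))))
  | R2find => inl (inl (inl (inr tt)))
  | R2chk b c => inl (inl (inr (b, c)))
  | Pause => inl (inr tt)
  | Stop => inr tt
  end.

Definition st_dec (x : stT) : st :=
  match x with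
  | inl (inl (inl (inl (inl (inl (inl (inl _))))))) => Start
  | inl (inl (inl (inl (inl (inl (inl (inr _))))))) => Disp
  | inl (inl (inl (inl (inl (inl (inr b)))))) => R1scan b
  | inl (inl (inl (inl (inl (inr b))))) => R1send b
  | inl (inl (inl (inl (inr b)))) => R1sep b
  | inl (inl (inl (inr _))) => R2find
  | inl (inl (inr (b, c))) => R2chk b c
  | inl (inr _) => Pause
  | inr _ => Stop
  end.

Lemma st_encK : cancel st_enc st_dec. Proof. by case. Qed.

HB.instance Definition _ := Equality.copy st (can_type st_encK).
HB.instance Definition _ := Choice.copy st (can_type st_encK).
HB.instance Definition _ := Countable.copy st (can_type st_encK).
HB.instance Definition _ := Finite.copy st (can_type st_encK).


Section RunGen.
Variable M : dtm.

Lemma run_halted n (C : cfg (state M)) : halted C -> run_until n C = C.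
Proof. by case: n => //= n ->. Qed.

Lemma run_add k n (C : cfg (state M)) :
  run_until (k + n) C = run_until n (run_until k C).
Proof.
elim: k C => [|k IH] C //=.
case: ifP => H; first by rewrite run_halted.
exact: IH.
Qed.

Lemma run_uniq f g (C : cfg (state M)) :
  halted (run_until f C) -> halted (run_until g C) -> run_until f C = run_until g C.
Proof.
move=> Hf Hg.
by rewrite -(run_halted g Hf) -(run_halted f Hg) -!run_add addnC.
Qed.

Lemma run_more f n (C : cfg (state M)) :
  halted (run_until f C) -> run_until (f + n) C = run_until f C.
Proof. by move=> H; rewrite run_add run_halted. Qed.

Lemma exec_uniq (G : graph) (id kappa : vertex G -> bits) F1 F2 r :
  (exec M id kappa F1 r).2 -> (exec M id kappa F2 r).2 ->
  forall u, (exec M id kappa F1 r).1 u = (exec M id kappa F2 r).1 u.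
Proof.
elim: r => [|r IH] //=.
case E1: (exec M id kappa F1 r) => [S1 ok1].
case E2: (exec M id kappa F2 r) => [S2 ok2] /=.
move=> /andP[o1 /forallP h1] /andP[o2 /forallP h2] u.
rewrite E1 E2 /= in IH.
have HS : S1 = S2 by apply: functional_extensionality_dep => v; apply: IH.
subst S2.
move: (h1 u) (h2 u); rewrite /node_round.
case: (ns_stop (S1 u)) => //= H1 H2.
by rewrite (run_uniq H1 H2).
Qed.

End RunGen.

Lemma index_map_in (T1 T2 : eqType) (f : T1 -> T2) (s : seq T1) x :
  x \in s -> {in s &, injective f} -> index (f x) (map f s) = index x s.
Proof.
elim: s => [|y s IH] //= xin inj.
case: (eqVneq y x) => [->|nyx]; first by rewrite eqxx.
have xs : x \in s by move: xin; rewrite inE eq_sym (negbTE nyx).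
have -> : (f y == f x) = false.
  apply/negbTE/eqP => E; move/eqP: nyx; apply.
  by apply: inj; rewrite ?inE ?eqxx ?xs ?orbT.
rewrite IH //.
by move=> a b ha hb; apply: inj; rewrite inE ?ha ?hb orbT.
Qed.

Lemma mem_nbrs (G : graph) (id : vertex G -> bits) u v :
  (v \in nbrs id u) = gadj u v.
Proof. by rewrite /nbrs mem_sort mem_filter mem_enum andbT. Qed.

Section Cover.
Variables (M : dtm) (G' G : graph) (phi : vertex G' -> vertex G).
Variables (id' kappa' : vertex G' -> bits) (id kappa : vertex G -> bits).
Hypothesis Hid : forall u, id' u = id (phi u).
Hypothesis Hka : forall u, kappa' u = kappa (phi u).
Hypothesis Hlab : forall u, glab u = glab (phi u).
Hypothesis Hnb : forall u, map phi (nbrs id' u) = nbrs id (phi u).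
Hypothesis Hinj : forall v, {in nbrs id' v &, injective phi}.
Hypothesis Hsurj : forall v, exists u, phi u = v.

Lemma cover_round F (S' : vertex G' -> nstate) S :
  (forall u, S' u = S (phi u)) ->
  forall u, node_round M id' F S' u = node_round M id F S (phi u).
Proof.
move=> HS u; rewrite /node_round.
set r1 := flatten _. set r2 := flatten _.
have -> : r1 = r2.
  rewrite /r1 /r2 -Hnb -map_comp; congr flatten.
  apply/eq_in_map => v vin /=.
  rewrite HS -Hnb index_map_in //.
  by rewrite mem_nbrs gadj_sym -(mem_nbrs id').
by rewrite HS.
Qed.

Lemma cover_exec F r :
  (forall u, (exec M id' kappa' F r).1 u = (exec M id kappa F r).1 (phi u)) /\
  (exec M id' kappa' F r).2 = (exec M id kappa F r).2.
Proof.
elim: r => [|r [IH1 IH2]] /=.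
  by split=> // u; rewrite Hid Hka Hlab.
case E1: (exec M id' kappa' F r) => [S1 ok1].
case E2: (exec M id kappa F r) => [S2 ok2] /=.
rewrite E1 E2 /= in IH1 IH2; subst ok2.
have HR := cover_round F IH1.
split=> [u|]; first by rewrite HR.
congr andb; apply/forallP/forallP => H x.
  by have [y <-] := Hsurj x; rewrite -HR.
by rewrite HR.
Qed.

Lemma cover_accepts : accepts M id' kappa' <-> accepts M id kappa.
Proof.
rewrite /accepts; split=> -[f [r H]]; exists f, r; move: H;
have [H1 H2] := cover_exec (fun _ => f) r;
case E1: (exec M id' kappa' (fun _ => f) r) H1 H2 => [S1 ok1];
case E2: (exec M id kappa (fun _ => f) r) => [S2 ok2] /= H1 <-;
move=> [ok [st out]]; split=> //; split => u.
- by have [y <-] := Hsurj u; rewrite -H1.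
- by have [y <-] := Hsurj u; rewrite -H1.
- by rewrite H1.
- by rewrite H1.
Qed.

End Cover.

Definition adjn (n u v : nat) : bool :=
  (u.+1 == v) || (v.+1 == u) || ((u == 0) && (v == n.-1)) || ((v == 0) && (u == n.-1)).

Section Cyc.
Variable k : nat.
Local Notation n := k.+3.

Definition cadj : rel 'I_n := fun u v => adjn n u v.

Lemma cadj_sym u v : cadj u v = cadj v u.
Proof. rewrite /cadj /adjn. lia. Qed.

Lemma cadj_irr u : ~~ cadj u u.
Proof. rewrite /cadj /adjn. lia. Qed.

Lemma cconn u v : connect cadj u v.
Proof.
have H0 : forall i (Hi : i < n), connect cadj ord0 (Ordinal Hi).
  elim=> [|i IH] Hi; first by rewrite (_ : Ordinal Hi = ord0) //; apply: val_inj.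
  have Hi' : i < n by lia.
  apply: connect_trans (IH Hi') _; apply: connect1.
  by rewrite /cadj /adjn /= eqxx.
apply: (@connect_trans _ _ ord0).
  rewrite (sym_connect_sym cadj_sym); case: u => u Hu; exact: H0.
case: v => v Hv; exact: H0.
Qed.

Definition cyc : graph :=
  {| gsize := n; gadj := cadj; glab := fun _ => [::];
     gsize_pos := erefl; gadj_sym := cadj_sym; gadj_irr := cadj_irr;
     gconn := cconn |}.

Lemma cyc_Delta : graph_Delta 2 cyc.
Proof.
rewrite /graph_Delta /vertex /= => u; rewrite addn0 /degree.
pose a : 'I_n := inord (if u.+1 == n then 0 else u.+1).
pose b : 'I_n := inord (if u == 0 :> nat then n.-1 else u.-1).
apply: (@leq_trans #|[set a; b]|); last by rewrite cards2; case: (a != b).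
apply: subset_leq_card; apply/subsetP; rewrite /vertex /= => v; rewrite !inE /= /cadj /adjn.
have hu : u < n := ltn_ord u. have hv : v < n := ltn_ord v.
rewrite -!(inj_eq (@ord_inj _)) /a /b !inordK; try by case: ifP => /eqP; lia.
case: ifP => /eqP H1; case: ifP => /eqP H2; rewrite /= ?orbF; lia.
Qed.

End Cyc.

Definition bip (G : graph) : Prop :=
  exists f : vertex G -> bool, forall u v, gadj u v -> f u != f v.

Lemma bip_prop : is_property bip.
Proof.
move=> G H [f [[g fK gK] [Hadj _]]] [c Hc].
exists (fun x => c (g x)) => x y Hxy; apply: Hc.
by rewrite -Hadj !gK.
Qed.

Lemma lexle_total s t : lexle s t || lexle t s.
Proof.
elim: s t => [|b s IH] [|c t] //=.
by case: b; case: c => //=; apply: IH.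
Qed.

Lemma lexle_trans s t w : lexle s t -> lexle t w -> lexle s w.
Proof.
elim: s t w => [|b s IH] [|c t] [|d w] //=.
by case: b c d => -[] [] //=; apply: IH.
Qed.

Lemma lexle_anti s t : lexle s t -> lexle t s -> s = t.
Proof.
elim: s t => [|b s IH] [|c t] //=.
by case: b c => -[] //= H1 H2; rewrite (IH t).
Qed.

Lemma cyc_ball k (u v : 'I_k.+3) j : ball (G := cyc k) j u v ->
  (v <= u + j /\ u <= v + j) \/ (v + k.+3 <= u + j) \/ (u + k.+3 <= v + j).
Proof.
elim: j v => [|j IH] v /=.
  by move/eqP => ->; lia.
case/orP => [/IH|/existsP[w /andP[/IH Hw]]]; first by lia.
rewrite /cadj /adjn /=.
have := ltn_ord u; have := ltn_ord v; have := ltn_ord w.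
move: Hw; rewrite /vertex /=.
lia.
Qed.

Lemma cyc_even_bip a : bip (cyc (a.+3 + a)).
Proof.
exists (fun v => odd v) => u v; rewrite /= /cadj /adjn.
have := ltn_ord u; have := ltn_ord v; rewrite /vertex /=.
lia.
Qed.

Lemma cyc_odd_nbip r : ~ bip (cyc (4 * r)).
Proof.
case=> f Hf.
have H : forall i, i < (4 * r).+3 ->
    f (inord i) = f (inord 0) (+) odd i.
  elim=> [|i IH] Hi; first by rewrite addbF.
  have := Hf (inord i) (inord i.+1).
  rewrite /= /cadj /adjn !inordK; [|lia|lia].
  rewrite eqxx /= => /(_ isT).
  rewrite IH; last by lia.
  by case: (f (inord i.+1)); case: (f (inord 0)); case: (odd i).
have := Hf (inord 0) (inord (4 * r).+2).
rewrite /= /cadj /adjn !inordK; [|lia|lia].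
rewrite [f (inord (4 * r).+2)]H //.
have -> : odd (4 * r).+2 = false by lia.
rewrite addbF => HH.
suff: f (inord 0) != f (inord 0) by rewrite eqxx.
apply: HH; lia.
Qed.

Section Cover2.
Variable a : nat.
Local Notation L := a.+3.
Local Notation N := (a.+3 + a).+3.

Definition phi (i : 'I_N) : 'I_L := inord (if i < L then (i : nat) else i - L).
Definition idB (i : 'I_L) : bits := nseq i true.
Definition idT (i : 'I_N) : bits := idB (phi i).

Lemma phiE (i : 'I_N) : nat_of_ord (phi i) = if i < L then (i : nat) else i - L.
Proof. rewrite inordK //; have := ltn_ord i; case: ifP; lia. Qed.

Lemma phi_adj (u v : 'I_N) : cadj u v -> cadj (phi u) (phi v).
Proof.
rewrite /cadj /adjn !phiE.
have := ltn_ord u; have := ltn_ord v.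
case: (ltnP u L); case: (ltnP v L); lia.
Qed.

Lemma phi_inj (v x y : 'I_N) : cadj v x -> cadj v y -> phi x = phi y -> x = y.
Proof.
move=> h1 h2 /(congr1 (@nat_of_ord _)); rewrite !phiE => E.
apply: ord_inj; move: h1 h2 E; rewrite /cadj /adjn.
have := ltn_ord v; have := ltn_ord x; have := ltn_ord y.
case: (ltnP x L); case: (ltnP y L); lia.
Qed.

Lemma phi_lift (u : 'I_N) (w : 'I_L) : cadj (phi u) w ->
  exists2 v : 'I_N, cadj u v & phi v = w.
Proof.
have hw := ltn_ord w; have hu := ltn_ord u.
have p1 : phi (inord w) = w.
  by apply: ord_inj; rewrite phiE inordK; [case: ifP; lia|lia].
have p2 : phi (inord (w + L)) = w.
  by apply: ord_inj; rewrite phiE inordK; [case: ifP; lia|lia].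
rewrite /cadj /adjn phiE => H.
have : adjn N u (w : nat) || adjn N u (w + L).
  move: H; rewrite /adjn; case: (ltnP u L); lia.
case/orP => Ha.
  by exists (inord w) => //; rewrite /cadj inordK //; lia.
by exists (inord (w + L)) => //; rewrite /cadj inordK //; lia.
Qed.

Lemma idB_inj : injective idB.
Proof. by move=> x y /(congr1 size); rewrite !size_nseq => /ord_inj. Qed.

Lemma cyc_nbrs (u : vertex (cyc (a.+3 + a))) :
  map phi (nbrs (G := cyc (a.+3 + a)) idT u) = nbrs (G := cyc a) idB (phi u).
Proof.
rewrite /nbrs.
set s := [seq v <- _ | _].
rewrite (_ : sort _ s = sort (relpre phi (fun v w => lexle (idB v) (idB w))) s) //.
rewrite -sort_map.
apply/perm_sort_inP.
- by move=> x y _ _; apply: lexle_total.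
- by move=> x y z _ _ _; apply: lexle_trans.
- by move=> x y _ _ /andP[h1 h2]; apply: idB_inj; apply: lexle_anti.
apply: uniq_perm.
- rewrite map_inj_in_uniq; first by rewrite filter_uniq // enum_uniq.
  move=> x y; rewrite !mem_filter => /andP[hx _] /andP[hy _].
  exact: phi_inj hx hy.
- by rewrite filter_uniq // enum_uniq.
move=> w; rewrite mem_filter mem_enum andbT /=.
apply/mapP/idP.
  by case=> v; rewrite mem_filter mem_enum andbT => /phi_adj h ->.
case/phi_lift => v hv <-; exists v => //.
by rewrite mem_filter mem_enum andbT.
Qed.

End Cover2.

Definition nat_of_sym (s : sym) : nat :=
  match s with SLend => 0 | SBlank => 1 | SSep => 2 | S0 => 3 | S1 => 4 end.
Definition sym_of_nat (n : nat) : option sym :=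
  match n with 0 => Some SLend | 1 => Some SBlank | 2 => Some SSep | 3 => Some S0
  | 4 => Some S1 | _ => None end.
Lemma nat_of_symK : pcancel nat_of_sym sym_of_nat. Proof. by case. Qed.
HB.instance Definition _ := Equality.copy sym (pcan_type nat_of_symK).

Definition sb := sym_of_bit.

Definition stay := (MoveS, MoveS, MoveS).

Definition scan_tr (f : bool) (r i s : sym) :=
  match i with
  | SBlank => (R1send f, (r, sb f, s), (MoveR, MoveS, MoveR))
  | S1 => (R1scan true, (r, SLend, s), (MoveS, MoveR, MoveS))
  | _ => (R1scan false, (r, SLend, s), (MoveS, MoveR, MoveS))
  end.

Definition bdelta (q : st) (x : sym * sym * sym) : st * (sym * sym * sym) * (move * move * move) :=
  let: (r, i, s) := x in
  match q with
  | Start => (Disp, (r, i, s), (MoveS, MoveR, MoveS))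
  | Disp => if i is SLend then (R2find, (r, i, s), (MoveS, MoveR, MoveS))
            else scan_tr false r i s
  | R1scan f => scan_tr f r i s
  | R1send c => match r with
       | SSep => (R1sep c, (r, i, sb c), (MoveS, MoveS, MoveR))
       | SBlank => (Pause, (r, i, SSep), stay)
       | _ => (R1send c, (r, i, s), (MoveR, MoveS, MoveS))
       end
  | R1sep c => (R1send c, (r, i, SSep), (MoveR, MoveS, MoveR))
  | R2find => match i with
       | SLend => (R2find, (r, i, s), (MoveS, MoveR, MoveS))
       | S0 => (R2chk false true, (r, i, s), (MoveR, MoveS, MoveS))
       | S1 => (R2chk true true, (r, i, s), (MoveR, MoveS, MoveS))
       | _ => (Stop, (r, i, s), stay)
       end
  | R2chk c ok => match r with
       | S0 => (R2chk c (ok && c), (r, i, s), (MoveR, MoveS, MoveS))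
       | S1 => (R2chk c (ok && ~~ c), (r, i, s), (MoveR, MoveS, MoveS))
       | SBlank => (Stop, (r, (if ok then S1 else SLend), s), stay)
       | _ => (R2chk c ok, (r, i, s), (MoveR, MoveS, MoveS))
       end
  | Pause => (Pause, (r, i, s), stay)
  | Stop => (Stop, (r, i, s), stay)
  end.

Definition BM : dtm :=
  {| state := st; q_start := Start; q_pause := Pause; q_stop := Stop;
     q_start_pause := erefl; q_start_stop := erefl; q_pause_stop := erefl;
     delta := bdelta |}.

Notation C q rt it stp hr hi hs := (@Cfg (state BM) q rt it stp hr hi hs).

Lemma nth_mid (p t : tape) x : nth SBlank (p ++ x :: t) (size p) = x.
Proof. by elim: p. Qed.
Lemma nth_end (p : tape) : nth SBlank p (size p) = SBlank.
Proof. by elim: p. Qed.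
Lemma set_mid (p t : tape) x y : set_nth SBlank (p ++ x :: t) (size p) y = p ++ y :: t.
Proof. by elim: p => //= z p ->. Qed.
Lemma set_end (p : tape) y : set_nth SBlank p (size p) y = p ++ [:: y].
Proof. by elim: p => //= z p ->. Qed.

Lemma tread_mid (p t : tape) x h : h = (size p).+1 -> tread (p ++ x :: t) h = x.
Proof. by move=> ->; apply: nth_mid. Qed.
Lemma tread_end (p : tape) h : h = (size p).+1 -> tread p h = SBlank.
Proof. by move=> ->; apply: nth_end. Qed.
Lemma twrite_mid (p t : tape) x y h : h = (size p).+1 -> twrite (p ++ x :: t) h y = p ++ y :: t.
Proof. by move=> ->; apply: set_mid. Qed.
Lemma twrite_end (p : tape) y h : h = (size p).+1 -> twrite p h y = p ++ [:: y].
Proof. by move=> ->; apply: set_end. Qed.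

Lemma run_S n (c : cfg (state BM)) : ~~ halted c -> run_until n.+1 c = run_until n (tm_step c).
Proof. by move=> /= /negbTE ->. Qed.

Definition nb (x : sym) := x != SBlank.


Definition chkf (c ok : bool) (x : sym) :=
  match x with S0 => ok && c | S1 => ok && ~~ c | _ => ok end.

Lemma start_step rt t sp :
  tm_step (C Start rt t sp 0 0 0) = C Disp rt t sp 0 1 0.
Proof. by []. Qed.

Lemma disp1_step rt x t sp : nb x -> x != SLend ->
  tm_step (C Disp rt (x :: t) sp 0 1 0) = C (R1scan (x == S1)) rt (SLend :: t) sp 0 2 0.
Proof. by case: x. Qed.

Lemma scan_step f (p t : tape) x rt sp :
  nb x ->
  tm_step (C (R1scan f) rt (p ++ x :: t) sp 0 (size p).+1 0) =
  C (R1scan (x == S1)) rt (p ++ SLend :: t) sp 0 (size p).+2 0.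
Proof.
move=> hx; rewrite /tm_step tread_mid //=.
by case: x hx => //= _; rewrite ?set_mid ?twrite_mid.
Qed.

Lemma scan_end f (p : tape) rt sp :
  tm_step (C (R1scan f) rt p sp 0 (size p).+1 0) =
  C (R1send f) rt (p ++ [:: sb f]) sp 1 (size p).+1 1.
Proof. by rewrite /tm_step (tread_end (p:=p)) //= ?set_end ?twrite_end. Qed.

Lemma send_step c (p q ip sp : tape) y :
  tm_step (C (R1send c) (p ++ SSep :: q) (ip ++ [:: y]) sp (size p).+1 (size ip).+1 (size sp).+1) =
  C (R1sep c) (p ++ SSep :: q) (ip ++ [:: y]) (sp ++ [:: sb c]) (size p).+1 (size ip).+1 (size sp).+2.
Proof.
rewrite /tm_step (tread_mid (p:=p)) // (tread_mid (p:=ip)) // (tread_end (p:=sp)) //=.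
by rewrite ?set_mid ?set_end ?twrite_mid ?twrite_end.
Qed.

Lemma sep_step c (p q ip sp : tape) y :
  tm_step (C (R1sep c) (p ++ SSep :: q) (ip ++ [:: y]) sp (size p).+1 (size ip).+1 (size sp).+1) =
  C (R1send c) (p ++ SSep :: q) (ip ++ [:: y]) (sp ++ [:: SSep]) (size p).+2 (size ip).+1 (size sp).+2.
Proof.
rewrite /tm_step (tread_mid (p:=p)) // (tread_mid (p:=ip)) // (tread_end (p:=sp)) //=.
by rewrite ?set_mid ?set_end ?twrite_mid ?twrite_end.
Qed.

Lemma send_end c (p ip sp : tape) y :
  tm_step (C (R1send c) p (ip ++ [:: y]) sp (size p).+1 (size ip).+1 (size sp).+1) =
  C Pause (p ++ [:: SBlank]) (ip ++ [:: y]) (sp ++ [:: SSep]) (size p).+1 (size ip).+1 (size sp).+1.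
Proof.
rewrite /tm_step (tread_end (p:=p)) // (tread_mid (p:=ip)) // (tread_end (p:=sp)) //=.
by rewrite ?set_mid ?set_end ?twrite_mid ?twrite_end.
Qed.

Lemma disp2_step rt t sp :
  tm_step (C Disp rt (SLend :: t) sp 0 1 0) = C R2find rt (SLend :: t) sp 0 2 0.
Proof. by []. Qed.

Lemma find_step (p t : tape) rt sp :
  tm_step (C R2find rt (p ++ SLend :: t) sp 0 (size p).+1 0) =
  C R2find rt (p ++ SLend :: t) sp 0 (size p).+2 0.
Proof. by rewrite /tm_step tread_mid //= ?set_mid ?twrite_mid. Qed.

Lemma find_end (p : tape) c rt sp :
  tm_step (C R2find rt (p ++ [:: sb c]) sp 0 (size p).+1 0) =
  C (R2chk c true) rt (p ++ [:: sb c]) sp 1 (size p).+1 0.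
Proof. by rewrite /tm_step tread_mid //=; case: c => /=; rewrite ?set_mid ?twrite_mid. Qed.

Lemma chk_step c ok (p q ip sp : tape) x y : nb x ->
  tm_step (C (R2chk c ok) (p ++ x :: q) (ip ++ [:: y]) sp (size p).+1 (size ip).+1 0) =
  C (R2chk c (chkf c ok x)) (p ++ x :: q) (ip ++ [:: y]) sp (size p).+2 (size ip).+1 0.
Proof.
move=> hx; rewrite /tm_step (tread_mid (p:=p)) // (tread_mid (p:=ip)) //=.
by case: x hx => //= _; rewrite ?set_mid ?twrite_mid.
Qed.

Lemma chk_end c ok (p ip sp : tape) y :
  tm_step (C (R2chk c ok) p (ip ++ [:: y]) sp (size p).+1 (size ip).+1 0) =
  C Stop (p ++ [:: SBlank]) (ip ++ [:: if ok then S1 else SLend]) sp (size p).+1 (size ip).+1 0.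
Proof.
by rewrite /tm_step (tread_end (p:=p)) // (tread_mid (p:=ip)) //= ?set_mid ?set_end ?twrite_mid ?twrite_end.
Qed.

Definition lastb (f : bool) (t : tape) := foldl (fun _ x => x == S1) f t.

Lemma rS n (c : cfg (state BM)) : ~~ halted c -> run_until n.+1 c = run_until n (tm_step c).
Proof. by move=> /= /negbTE ->. Qed.

Lemma scan_loop t p f rt sp : all nb t ->
  run_until (size t) (C (R1scan f) rt (p ++ t) sp 0 (size p).+1 0) =
  C (R1scan (lastb f t)) rt (p ++ nseq (size t) SLend) sp 0 (size p + size t).+1 0.
Proof.
elim: t p f => [|x t IH] p f; first by rewrite /= !cats0 addn0.
move=> /andP[hx ht]; rewrite rS // scan_step //.
have -> : p ++ SLend :: t = rcons p SLend ++ t by rewrite cat_rcons.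
have -> : (size p).+2 = (size (rcons p SLend)).+1 by rewrite size_rcons.
rewrite IH // size_rcons addSnnS; congr Cfg.
by rewrite -cat_rcons.
Qed.

Lemma send_loop c k p sp ip y :
  run_until (2 * k) (C (R1send c) (p ++ nseq k SSep) (ip ++ [:: y]) sp (size p).+1 (size ip).+1 (size sp).+1) =
  C (R1send c) (p ++ nseq k SSep) (ip ++ [:: y]) (sp ++ flatten (nseq k [:: sb c; SSep]))
    (size p + k).+1 (size ip).+1 (size sp + 2 * k).+1.
Proof.
elim: k p sp => [|k IH] p sp; first by rewrite /= !cats0 !addn0.
rewrite mulnS !addSn add0n rS // send_step rS //.
have E0 : (size sp).+2 = (size (sp ++ [:: sb c])).+1 by rewrite size_cat addn1.
rewrite E0 sep_step.
have E1 : p ++ nseq k.+1 SSep = rcons p SSep ++ nseq k SSep by rewrite cat_rcons.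
have E2 : (size p).+2 = (size (rcons p SSep)).+1 by rewrite size_rcons.
have E3 : (size (sp ++ [:: sb c])).+2 = (size ((sp ++ [:: sb c]) ++ [:: SSep])).+1
  by rewrite !size_cat /= addn1 addn1.
rewrite E1 E2 E3 IH -E1; congr Cfg.
- by rewrite -!catA.
- by rewrite size_rcons; lia.
- by rewrite !size_cat /=; lia.
Qed.

Lemma find_loop k p t rt sp :
  run_until k (C R2find rt (p ++ nseq k SLend ++ t) sp 0 (size p).+1 0) =
  C R2find rt (p ++ nseq k SLend ++ t) sp 0 (size p + k).+1 0.
Proof.
elim: k p => [|k IH] p; first by rewrite addn0.
rewrite rS // find_step.
have E1 : p ++ nseq k.+1 SLend ++ t = rcons p SLend ++ nseq k SLend ++ t by rewrite cat_rcons.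
have E2 : (size p).+2 = (size (rcons p SLend)).+1 by rewrite size_rcons.
by rewrite E1 E2 IH size_rcons addSnnS.
Qed.

Lemma chk_loop c q p ok ip y sp : all nb q ->
  run_until (size q) (C (R2chk c ok) (p ++ q) (ip ++ [:: y]) sp (size p).+1 (size ip).+1 0) =
  C (R2chk c (foldl (chkf c) ok q)) (p ++ q) (ip ++ [:: y]) sp (size p + size q).+1 (size ip).+1 0.
Proof.
elim: q p ok => [|x q IH] p ok; first by rewrite /= addn0.
move=> /andP[hx hq]; rewrite rS // chk_step //.
have E1 : p ++ x :: q = rcons p x ++ q by rewrite cat_rcons.
have E2 : (size p).+2 = (size (rcons p x)).+1 by rewrite size_rcons.
by rewrite E1 E2 IH // size_rcons addSnnS.
Qed.

Lemma send_end' c (p ip sp : tape) y hr hi hs :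
  hr = (size p).+1 -> hi = (size ip).+1 -> hs = (size sp).+1 ->
  tm_step (C (R1send c) p (ip ++ [:: y]) sp hr hi hs) =
  C Pause (p ++ [:: SBlank]) (ip ++ [:: y]) (sp ++ [:: SSep]) hr hi hs.
Proof. by move=> -> -> ->; apply: send_end. Qed.

Lemma round1 (t : tape) d : all nb t -> head SBlank t != SLend -> t != [::] ->
  run_until (size t + 2 * d + 3) (C Start (nseq d SSep) t [::] 0 0 0) =
  C Pause (nseq d SSep ++ [:: SBlank]) (nseq (size t) SLend ++ [:: sb (lastb false t)])
    (flatten (nseq d [:: sb (lastb false t); SSep]) ++ [:: SSep]) d.+1 (size t).+1 (2 * d).+1.
Proof.
case: t => [//|x t'] /andP[hx ht] hxl _.
rewrite (_ : lastb false (x :: t') = lastb (x == S1) t') //.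
set col := lastb (x == S1) t'.
have -> : size (x :: t') + 2 * d + 3 = (size t' + (2 * d + 2)).+2 by rewrite /=; lia.
rewrite rS // start_step rS // disp1_step //.
rewrite run_add.
have := scan_loop [:: SLend] (x == S1) (nseq d SSep) [::] ht.
rewrite /= => ->.
rewrite addn2 rS //.
have E : (size t').+2 = (size (SLend :: nseq (size t') SLend)).+1 by rewrite /= size_nseq.
rewrite E scan_end.
rewrite -addn1 run_add.
rewrite (send_loop col d [::] [::] (SLend :: nseq (size t') SLend) (sb col)).
have Hs : size (flatten (nseq d [:: sb col; SSep])) = 2 * d.
  by elim: d {E} => //= d ->; lia.
rewrite rS // send_end' //; last by rewrite Hs.
  by rewrite /= size_nseq !add0n addn1.
by rewrite /= size_nseq.
Qed.

Lemma find_end' (p : tape) c rt sp h : h = (size p).+1 ->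
  tm_step (C R2find rt (p ++ [:: sb c]) sp 0 h 0) =
  C (R2chk c true) rt (p ++ [:: sb c]) sp 1 (size p).+1 0.
Proof. by move=> ->; apply: find_end. Qed.

Lemma chk_end' c ok (p ip sp it : tape) y hr hi :
  it = ip ++ [:: y] -> hr = (size p).+1 -> hi = (size ip).+1 ->
  tm_step (C (R2chk c ok) p it sp hr hi 0) =
  C Stop (p ++ [:: SBlank]) (ip ++ [:: if ok then S1 else SLend]) sp hr hi 0.
Proof. by move=> -> -> ->; apply: chk_end. Qed.
Arguments chk_end' : clear implicits.

Lemma round2 n c rt : all nb rt -> 0 < n ->
  run_until (n + size rt + 3) (C Start rt (nseq n SLend ++ [:: sb c]) [::] 0 0 0) =
  C Stop (rt ++ [:: SBlank]) (nseq n SLend ++ [:: if foldl (chkf c) true rt then S1 else SLend])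
    [::] (size rt).+1 n.+1 0.
Proof.
case: n => [//|m] hrt _.
have -> : m.+1 + size rt + 3 = (m + (size rt).+2).+2 by lia.
rewrite rS // start_step rS // disp2_step run_add.
have H := find_loop m [:: SLend] [:: sb c] rt [::].
rewrite /= in H; rewrite H.
rewrite rS //.
rewrite (find_end' (p := SLend :: nseq m SLend)); last by rewrite /= size_nseq.
rewrite -addn1 run_add.
have H2 := chk_loop c [::] true (SLend :: nseq m SLend) (sb c) [::] hrt.
rewrite /= in H2; rewrite H2.
rewrite rS // (chk_end' _ _ _ (SLend :: nseq m SLend) _ _ (sb c) _ _) //.
by rewrite /= size_nseq add0n addn1.
Qed.

Lemma run_ge k f (c d : cfg (state BM)) :
  run_until k c = d -> halted d -> k <= f -> run_until f c = d.
Proof.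
move=> E hd kf; rewrite -(subnKC kf) run_add E; exact: run_halted.
Qed.

Lemma clen_nb t : all nb t -> clen t = size t.
Proof.
rewrite /clen -(size_rev t) -all_rev; case: (rev t) => //= x r /andP[hx _].
by case: x hx.
Qed.

Lemma all_nb_enc s : all nb (enc s).
Proof. by elim: s => //= b s ->; case: b. Qed.

Lemma init_nb l i k : all nb (init_int l i k).
Proof. by rewrite /init_int all_cat /= all_cat /= !all_nb_enc. Qed.

Lemma init_head l i k : head SBlank (init_int l i k) != SLend.
Proof. by rewrite /init_int; case: l => //= b l; case: b. Qed.

Lemma init_ne l i k : init_int l i k != [::].
Proof. by rewrite /init_int; case: l. Qed.

Lemma lastb_rcons f s x : lastb f (s ++ [:: x]) = (x == S1).
Proof. by rewrite /lastb foldl_cat. Qed.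

Lemma col_single l i b : lastb false (init_int l i [:: b]) = b.
Proof.
have -> : init_int l i [:: b] = (enc l ++ SSep :: enc i ++ [:: SSep]) ++ [:: sb b].
  by rewrite /init_int -catA /= -catA.
by rewrite lastb_rcons; case: b.
Qed.

Lemma bits_of_out n x : bits_of (nseq n SLend ++ [:: x]) = bits_of [:: x].
Proof. by elim: n. Qed.

Lemma msg_nil i : msg [::] i = [::].
Proof. by rewrite /msg; case: i => [|i] //=; rewrite nth_nil. Qed.

Lemma flatten_seps (T : Type) (s : seq T) :
  flatten [seq enc [::] ++ [:: SSep] | _ <- s] = nseq (size s) SSep.
Proof. by elim: s => //= _ s ->. Qed.

Lemma split_pairs k b rest :
  split_sep (flatten (nseq k [:: sb b; SSep]) ++ rest) = nseq k [:: sb b] ++ split_sep rest.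
Proof. by elim: k => //= k ->; case: b. Qed.

Lemma msg_pairs k b rest i : i < k ->
  msg (flatten (nseq k [:: sb b; SSep]) ++ rest) i = [:: b].
Proof.
move=> hi; rewrite /msg split_pairs nth_cat size_nseq hi nth_nseq hi.
by case: b.
Qed.

Lemma chk_flat (T : Type) (f : T -> bool) c ok (s : seq T) :
  foldl (chkf c) ok (flatten [seq [:: sb (f v); SSep] | v <- s]) = ok && all (fun v => f v != c) s.
Proof.
elim: s ok => [|v s IH] ok /=; first by rewrite andbT.
rewrite IH; clear IH; case: (f v); case: ok; by case: c.
Qed.

Lemma all_nb_pairs (T : Type) (f : T -> bool) (s : seq T) :
  all nb (flatten [seq [:: sb (f v); SSep] | v <- s]).
Proof. by elim: s => //= v s ->; case: (f v). Qed.

Lemma size_pairs (T : Type) (f : T -> bool) (s : seq T) :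
  size (flatten [seq [:: sb (f v); SSep] | v <- s]) = 2 * size s.
Proof. by elim: s => //= v s ->; lia. Qed.

Section Exec.
Variables (G : graph) (id kappa : vertex G -> bits) (F : nat -> nat).

Definition t0 (u : vertex G) := init_int (glab u) (id u) (kappa u).
Definition nn u := size (t0 u).
Definition dd u := size (nbrs id u).
Definition col u := lastb false (t0 u).
Definition St1 u := NS (nseq (nn u) SLend ++ [:: sb (col u)])
  (flatten (nseq (dd u) [:: sb (col u); SSep]) ++ [:: SSep]) false.
Definition rt2 u := flatten [seq [:: sb (col v); SSep] | v <- nbrs id u].
Definition okb u := all (fun v => col v != col u) (nbrs id u).
Definition St2 u := NS (nseq (nn u) SLend ++ [:: if okb u then S1 else SLend]) [::] true.

Hypothesis HF1 : forall u, nn u + 2 * dd u + 3 <= F (dd u + nn u).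
Hypothesis HF2 : forall u, nn u + 2 * dd u + 3 <= F (2 * dd u + (nn u).+1).

Lemma nr1 u : node_round BM id F (fun v => NS (t0 v) [::] false) u = (St1 u, true).
Proof.
rewrite /node_round /=.
under eq_map do rewrite msg_nil.
rewrite flatten_seps -/(dd u).
have E := round1 (dd u) (init_nb (glab u) (id u) (kappa u)) (init_head _ _ _) (init_ne _ _ _).
rewrite clen_nb ?all_nseq ?orbT // size_nseq clen_nb ?init_nb //.
rewrite (run_ge E) //; last by have := HF1 u; rewrite /nn /t0.
Qed.

Lemma nr2 u : node_round BM id F St1 u = (St2 u, true).
Proof.
rewrite /node_round /=.
have -> : flatten [seq enc (msg (ns_send (St1 v)) (index u (nbrs id v))) ++ [:: SSep]
              | v <- nbrs id u] = rt2 u.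
  rewrite /rt2; congr flatten; apply/eq_in_map => v; rewrite mem_nbrs => huv /=.
  rewrite msg_pairs //.
  by rewrite /dd index_mem mem_nbrs gadj_sym.
have E := round2 (col u) (all_nb_pairs col (nbrs id u)) (n := nn u).
rewrite /nn lt0n size_eq0 init_ne in E.
have {}E := E isT.
rewrite clen_nb ?all_nb_pairs // clen_nb; last first.
  by rewrite all_cat all_nseq orbT /=; case: (col u).
rewrite size_pairs size_cat size_nseq addn1 -/(nn u) -/(dd u).
rewrite (run_ge E) //; last first.
  by rewrite size_pairs -/(dd u) -/(nn u); have := HF2 u.
by rewrite chk_flat.
Qed.

Lemma nr3 u : node_round BM id F St2 u = (St2 u, true).
Proof. by []. Qed.

Lemma exec_BM r :
  (exec BM id kappa F r).2 /\
  forall u, (exec BM id kappa F r).1 u =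
    match r with 0 => NS (t0 u) [::] false | 1 => St1 u | _ => St2 u end.
Proof.
elim: r => [|r [IH1 IH2]] //=.
case E: (exec BM id kappa F r) IH1 IH2 => [S ok] /= -> IH2.
have HS : S = (fun u => match r with 0 => NS (t0 u) [::] false | 1 => St1 u | _ => St2 u end).
  by apply: functional_extensionality => u; rewrite IH2.
subst S; case: r {E IH2} => [|[|r]].
- by split => [|u]; [apply/forallP => u; rewrite nr1 | rewrite nr1].
- by split => [|u]; [apply/forallP => u; rewrite nr2 | rewrite nr2].
- by split => [|u]; [apply/forallP => u; rewrite nr3 | rewrite nr3].
Qed.

End Exec.

Lemma local_poly_BM : local_poly BM.
Proof.
exists 2, [:: 3; 2] => G id kappa _.
have HF1 : forall u, nn id kappa u + 2 * dd id u + 3 <= npoly [:: 3; 2] (dd id u + nn id kappa u).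
  by move=> u; rewrite /npoly /=; lia.
have HF2 : forall u, nn id kappa u + 2 * dd id u + 3 <= npoly [:: 3; 2] (2 * dd id u + (nn id kappa u).+1).
  by move=> u; rewrite /npoly /=; lia.
have [ok Hs] := exec_BM HF1 HF2 2.
case E: (exec BM id kappa (npoly [:: 3; 2]) 2) ok Hs => [S o] /= ok Hs.
by split=> // u; rewrite Hs.
Qed.

Lemma bip_NLP : NLP bip.
Proof.
split; first exact: bip_prop.
exists BM, 1, 1, [:: 1]; split=> //; split=> //; split; first exact: local_poly_BM.
move=> G id _.
have key : forall kappa, let K := \max_(u : vertex G) (nn id kappa u + 2 * dd id u + 3) in
    forall r, (exec BM id kappa (fun _ => K) r).2 /\
    forall u, (exec BM id kappa (fun _ => K) r).1 u =
    match r with 0 => NS (t0 id kappa u) [::] false | 1 => St1 id kappa u | _ => St2 id kappa u end.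
  move=> kappa K r; apply: exec_BM => u /=; rewrite /K.
  - exact: (@leq_bigmax _ (fun u => nn id kappa u + 2 * dd id u + 3) u).
  - exact: (@leq_bigmax _ (fun u => nn id kappa u + 2 * dd id u + 3) u).
split.
- case=> f Hf; exists (fun u => [:: f u]); split.
    by move=> u; rewrite /npoly /=; lia.
  exists (\max_(u : vertex G) (nn id (fun u => [:: f u]) u + 2 * dd id u + 3)), 2.
  have [ok Hs] := key (fun u => [:: f u]) 2.
  case E: (exec _ _ _ _ 2) ok Hs => [S o] /= ok Hs.
  split=> //; split=> u; rewrite Hs //=.
  rewrite bits_of_out.
  have -> : okb id (fun u => [:: f u]) u.
    apply/allP => v; rewrite mem_nbrs => huv.
    rewrite /col /t0 !col_single eq_sym; apply: Hf.
    by [].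
  by [].
- case=> kappa [_ [f0 [r Hacc]]].
  have [okK HsK] := key kappa r.
  case E: (exec BM id kappa (fun _ => f0) r) Hacc => [S o] [ok [Hst Hout]].
  have HS := exec_uniq (M := BM) (id := id) (kappa := kappa) (r := r) (F1 := fun _ => f0) (F2 := fun _ => \max_(u : vertex G) (nn id kappa u + 2 * dd id u + 3)).
  rewrite E /= in HS.
  have {}HS := HS ok okK.
  have u0 : vertex G by exists 0; exact: gsize_pos.
  case: r E HS HsK okK => [|[|r]] E HS HsK okK.
  + by have := Hst u0; rewrite HS HsK.
  + by have := Hst u0; rewrite HS HsK.
  + exists (col id kappa) => u v huv.
    have := Hout u; rewrite HS HsK /= bits_of_out.
    case Hok: (okb id kappa u) => // _.
    move/allP: Hok => /(_ v); rewrite mem_nbrs eq_sym => /(_ huv).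
    by [].
Qed.

Lemma bip_notLP2 : ~ exists Q, LP Q /\ forall G, graph_Delta 2 G -> (Q G <-> bip G).
Proof.
case=> Q [[_ [M [rid [_ [_ HM]]]]] HQ].
pose a := 4 * rid. have ha : a = 4 * rid by []. clearbody a.
have HB := HM (cyc a) (@idB a).
have HT := HM (cyc (a.+3 + a)) (@idT a).
have luB : locally_unique rid (G := cyc a) (@idB a).
  by move=> u v nuv _; apply: contra nuv => /eqP/idB_inj ->.
have luT : locally_unique rid (G := cyc (a.+3 + a)) (@idT a).
  rewrite /locally_unique /vertex /= => u v nuv Hb; apply/negP => /eqP /idB_inj /(congr1 (@nat_of_ord _)).
  rewrite !phiE => E.
  move: nuv Hb => /negP nuv /cyc_ball Hb; apply: nuv; apply/eqP/ord_inj.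
  move: E Hb; have := ltn_ord u; have := ltn_ord v.
  case: (ltnP u a.+3); case: (ltnP v a.+3); lia.
have Hcov : accepts M (G := cyc (a.+3 + a)) (@idT a) (fun _ => [::]) <->
            accepts M (G := cyc a) (@idB a) (fun _ => [::]).
  apply: (@cover_accepts M (cyc (a.+3 + a)) (cyc a) (@phi a)) => //.
  - exact: cyc_nbrs.
  - move=> v x y; rewrite !mem_nbrs => hx hy; exact: phi_inj hx hy.
  - rewrite /vertex /= => w; exists (inord w); apply: ord_inj.
    have hw := ltn_ord w.
    rewrite phiE inordK; last by lia.
    by case: ifP; lia.
have := HB luB; have := HT luT; rewrite Hcov => ->.
rewrite (HQ _ (@cyc_Delta _)) (HQ _ (@cyc_Delta _)).
move=> [H1 H2]; subst a; apply: (@cyc_odd_nbip rid).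
by apply: H1; apply: cyc_even_bip.
Qed.

Lemma LP_NLP P : LP P -> NLP P.
Proof.
case=> HP [M [rid [hr [hM HM]]]].
split=> //; exists M, rid, 1, [::]; split=> //; split=> //; split=> //.
move=> G id lu; rewrite -(HM G id lu); split.
  by move=> H; exists (fun _ => [::]); split.
case=> kappa [Hb Hacc].
have -> : (fun _ : vertex G => [::] : bits) = kappa => //.
apply: functional_extensionality => u.
by have := Hb u; rewrite /npoly /=; case: (kappa u).
Qed.

Lemma restrict_mono (B : graph -> Prop) P : LP P -> restrict NLP B (fun G => P G /\ B G).
Proof. by move=> H; exists P; split=> //; apply: LP_NLP. Qed.

Theorem proposition9p1 :
  (forall Delta : nat, 2 <= Delta ->
     strict_subclass (restrict LP (graph_Delta Delta))
                     (restrict NLP (graph_Delta Delta))) /\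
  strict_subclass LP NLP.
Proof.
split.
  move=> D hD; split.
    move=> Q [P [HP HQ]]; exists P; split=> //; exact: LP_NLP.
  exists (fun G => bip G /\ graph_Delta D G); split.
    by exists bip; split=> //; exact: bip_NLP.
  case=> P [HP HQ]; apply: bip_notLP2; exists P; split=> // G HG.
  have HGD : graph_Delta D G.
    by move=> u; apply: leq_trans (HG u) hD.
  split; first by move=> H; have [] := (HQ G).2 (conj H HGD).
  by move=> H; have [] := (HQ G).1 (conj H HGD).
split; first exact: LP_NLP.
exists bip; split; first exact: bip_NLP.
move=> H; apply: bip_notLP2; exists bip; split=> //.
Qed.
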